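(* Let a countable group $G$ act on a set $X$, let $\Phi=(\ell,\phi,\mathcal{Z},\Gamma,\mathcal{H})$ be a chart for $G$, let $\epsilon>0$, let $q$ satisfy $6\epsilon<q<1-\epsilon$, and let $A\subseteq\mathbb{Z}^\ell\times\Gamma$ be a centered rectangle. Let $E$ be a $(\Phi,A,\epsilon)$-rectangular equivalence relation on $X$ and suppose the $E$-class $U$ is $(\Phi,\delta)$-roughly $B$ at $x\in X^{\mathcal{H}}$, where $B$ is a rectangle with $A\sqsubseteq B$, $2^{22\ell}\cdot B\subseteq\mathrm{dom}(\phi)$, and $2\delta\cdot B\sqsubseteq\epsilon\cdot A$. Writing $b=\mathrm{L}(B)$, for each $1\le i\le\ell$, $$\partial_i^\Phi(E,q\cdot A)\cap U\subseteq\phi\big(-b_i\cdot e_i+B^i+2q\cdot A\big)\cdot x\ \cup\ \phi\big(b_i\cdot e_i+B^i+2q\cdot A\big)\cdot x.$$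
   Context: Rectangles: Let $\Gamma$ be a finite additive abelian group with identity $0_\Gamma$ and $\ell\in\mathbb{N}$. Elements $v$ of $\mathbb{R}^\ell\times\Gamma$ have coordinates $v_1,\dots,v_\ell\in\mathbb{R}$, $v_{\ell+1}\in\Gamma$; $\mathbf{0}$ has first $\ell$ coordinates $0$, last $0_\Gamma$; $e_i$ has $i$-th coordinate $1$, other real coordinates $0$, last $0_\Gamma$; $\lambda\cdot v=(\lambda v_1,\dots,\lambda v_\ell,v_{\ell+1})$. $\mathrm{Rec}(a)=\{b\in\mathbb{Z}^\ell\times\Gamma: -|a_i|\le b_i\le|a_i|,\ 1\le i\le\ell\}$. A rectangle is $c+\mathrm{Rec}(a)$ with $c,a\in\mathbb{Z}^\ell\times\Gamma$; uniquely written with center $c\in\mathbb{Z}^\ell\times\{0_\Gamma\}$ and radius vector $\mathrm{L}(A)=a\in\mathbb{N}^\ell\times\{0_\Gamma\}$, entries $\mathrm{L}_i(A)$. Centered means center $\mathbf{0}$. $A\sqsubseteq B$ means $\mathrm{L}_i(A)\le\mathrm{L}_i(B)$ for all $i$. For $\lambda>0$, $\lambda\cdot A=c+\mathrm{Rec}(\lambda\cdot\mathrm{L}(A))$ ($c$ the center of $A$). $A^i=c+\mathrm{Rec}(\mathrm{L}(A)-\mathrm{L}_i(A)\cdot e_i)$. Sums are elementwise. Charts: a chart for $G$ is $\Phi=(\ell,\phi,\mathcal{Z},\Gamma,\mathcal{H})$ with $\mathcal{H}$ a finite collection of pairwise conjugate subgroups of $G$, $\Gamma$ finite abelian, $\mathcal{Z}$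 a centered rectangle with all $\mathrm{L}_i(\mathcal{Z})>0$, $\phi$ an injective map into $G$ with $\mathrm{dom}(\phi)$ a centered rectangle containing $3\cdot\mathcal{Z}$, $\phi(\mathbf{0})=1_G$, and for all $r,s\in\mathrm{dom}(\phi)$, $H\in\mathcal{H}$: $\phi(r)H=\phi(s)H\Rightarrow r=s$; $r+s+\mathcal{Z}\subseteq\mathrm{dom}(\phi)\Rightarrow\exists z\in\mathcal{Z}:\phi(r)\phi(s)H=\phi(r+s+z)H$; $r-s+\mathcal{Z}\subseteq\mathrm{dom}(\phi)\Rightarrow\exists z:\phi(r)\phi(s)^{-1}H=\phi(r-s+z)H$; $-r+s+\mathcal{Z}\subseteq\mathrm{dom}(\phi)\Rightarrow\exists z:\phi(r)^{-1}\phi(s)H=\phi(-r+s+z)H$; $-s+\mathcal{Z}\subseteq\mathrm{dom}(\phi)\Rightarrow\exists z:\phi(s)^{-1}H=\phi(-s+z)H$. $\phi(S)\cdot x=\{\phi(s)\cdot x:s\in S\}$; $X^{\mathcal{H}}=\{x\in X:\mathrm{Stab}(x)\in\mathcal{H}\}$. Rough rectangles: for a rectangle $B$ with $2\cdot B\subseteq\mathrm{dom}(\phi)$, $x\in X^{\mathcal{H}}$, $0<\delta<1$, $R\subseteq X$ is $(\Phi,\delta)$-roughly $B$ at $x$ if $2\cdot\mathcal{Z}\sqsubseteq\delta\cdot B$ and $\phi((1-\delta)\cdot B)\cdot x\subseteq R\subseteq\phi((1+\delta)\cdot B)\cdot x$. Rectangular: for $A$ centered and $0<\epsilon<1$, $E$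 is $(\Phi,A,\epsilon)$-rectangular if every $E$-class not meeting $X^{\mathcal{H}}$ is a singleton and every $E$-class $U$ meeting $X^{\mathcal{H}}$ is $(\Phi,\delta)$-roughly $B$ at some point of $X^{\mathcal{H}}$ for some $\delta>0$ and rectangle $B$ with $A\sqsubseteq B$, $2^{22\ell}\cdot B\subseteq\mathrm{dom}(\phi)$, $2\delta\cdot B\sqsubseteq\epsilon\cdot A$. Boundary: for $A'\subseteq\mathrm{dom}(\phi)$ centered and $1\le i\le\ell$, $\partial_i^\Phi(E,A')$ is the set of $x\in X^{\mathcal{H}}$ with $[\phi(A'^i-\mathrm{L}_i(A')\cdot e_i)\cdot x]_E\cap[\phi(A'^i+\mathrm{L}_i(A')\cdot e_i)\cdot x]_E=\varnothing$, $[Y]_E$ denoting the $E$-saturation. *)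

(* Defs.v *)
From HB Require Import structures.
From mathcomp Require Import all_boot all_order all_algebra.
From mathcomp Require Import reals.
From Stdlib Require List.
Set Implicit Arguments. Unset Strict Implicit. Unset Printing Implicit Defensive.
Import Order.TTheory GRing.Theory Num.Theory.
Local Open Scope ring_scope.

Record grp := Grp {
  gcar :> Type;
  gmul : gcar -> gcar -> gcar;
  ginv : gcar -> gcar;
  gone : gcar;
  gmulA : forall a b c, gmul a (gmul b c) = gmul (gmul a b) c;
  gmul1g : forall a, gmul gone a = a;
  gmulg1 : forall a, gmul a gone = a;
  gmulVg : forall a, gmul (ginv a) a = gone;
  gmulgV : forall a, gmul a (ginv a) = gone }.

Definition countable_grp (G : grp) : Prop := exists f : G -> nat, injective f.

Definition is_action (G : grp) (X : Type) (act : G -> X -> X) : Prop :=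
  (forall x, act (gone G) x = x) /\
  (forall g h x, act (gmul g h) x = act g (act h x)).

Definition is_subgroup (G : grp) (H : G -> Prop) : Prop :=
  [/\ H (gone G), (forall a b, H a -> H b -> H (gmul a b))
    & (forall a, H a -> H (ginv a))].

Definition conjugate_subgroups (G : grp) (H1 H2 : G -> Prop) : Prop :=
  exists g : G, forall k, H2 k <-> exists2 h, H1 h & k = gmul g (gmul h (ginv g)).

Definition lcoset_eq (G : grp) (H : G -> Prop) (g g' : G) : Prop :=
  forall k, (exists2 h, H h & k = gmul g h) <-> (exists2 h, H h & k = gmul g' h).

Definition stab (G : grp) (X : Type) (act : G -> X -> X) (x : X) : G -> Prop :=
  fun g => act g x = x.

Definition in_XH (G : grp) (X : Type) (act : G -> X -> X) (Hs : seq (G -> Prop))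
  (x : X) : Prop :=
  exists2 H, List.In H Hs & forall g, stab act x g <-> H g.

Definition pt (l : nat) (Gam : finZmodType) := ({ffun 'I_l -> int} * Gam)%type.

Definition padd l (Gam : finZmodType) (u v : pt l Gam) : pt l Gam :=
  ([ffun i => u.1 i + v.1 i], u.2 + v.2).
Definition popp l (Gam : finZmodType) (u : pt l Gam) : pt l Gam :=
  ([ffun i => - u.1 i], - u.2).
Definition p0 l (Gam : finZmodType) : pt l Gam := ([ffun=> 0], 0).
Definition pe l (Gam : finZmodType) (i : 'I_l) (t : int) : pt l Gam :=
  ([ffun j => if j == i then t else 0], 0).
Arguments pe {l} Gam i t.

Definition incl T (S S' : T -> Prop) : Prop := forall t, S t -> S' t.
Definition psingle T (v : T) : T -> Prop := fun w => w = v.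
Definition sadd l (Gam : finZmodType) (S S' : pt l Gam -> Prop) : pt l Gam -> Prop :=
  fun v => exists u w, [/\ S u, S' w & v = padd u w].

(* ---------- rectangles, in unique form: center in Z^l x {0}, radius in N^l ---------- *)
Record rect (l : nat) := Rect { rc : 'I_l -> int; rr : 'I_l -> nat }.

Definition rset l (Gam : finZmodType) (B : rect l) : pt l Gam -> Prop :=
  fun v => forall i, `|v.1 i - rc B i| <= (rr B i)%:Z.
Arguments rset {l} Gam B.

Definition centered l (B : rect l) : Prop := forall i, rc B i = 0.
Definition sqle l (A B : rect l) : Prop := forall i, (rr A i <= rr B i)%N.
Definition rscale (R : realType) l (lam : R) (B : rect l) : rect l :=
  Rect (rc B) (fun i => Num.truncn (lam * (rr B i)%:R)).
Definition rnscale l (n : nat) (B : rect l) : rect l :=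
  Rect (rc B) (fun i => (n * rr B i)%N).
Definition rface l (B : rect l) (i : 'I_l) : rect l :=
  Rect (rc B) (fun j => if j == i then 0%N else rr B j).

(* phi(S) . x ; phi is only meaningful on its domain D *)
Definition img (G : grp) (X : Type) (act : G -> X -> X) l (Gam : finZmodType)
  (D : rect l) (phi : pt l Gam -> G) (S : pt l Gam -> Prop) (x : X) : X -> Prop :=
  fun y => exists2 s, S s /\ rset Gam D s & y = act (phi s) x.

(* ---------- charts: Phi = (l, phi, Z, Gamma, Hs), dom(phi) = D ---------- *)
Definition is_chart (G : grp) l (Gam : finZmodType) (phi : pt l Gam -> G)
  (D Z : rect l) (Hs : seq (G -> Prop)) : Prop :=
  [/\ (forall H, List.In H Hs -> is_subgroup H),
      (forall H1 H2, List.In H1 Hs -> List.In H2 Hs -> conjugate_subgroups H1 H2),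
      centered Z /\ (forall i, (0 < rr Z i)%N),
      [/\ centered D, incl (rset Gam (rnscale 3 Z)) (rset Gam D),
      (forall r s, rset Gam D r -> rset Gam D s -> phi r = phi s -> r = s) &
      phi (p0 l Gam) = gone G]
    & forall r s H, rset Gam D r -> rset Gam D s -> List.In H Hs ->
      [/\ lcoset_eq H (phi r) (phi s) -> r = s,
          incl (sadd (psingle (padd r s)) (rset Gam Z)) (rset Gam D) ->
            exists2 z, rset Gam Z z &
              lcoset_eq H (gmul (phi r) (phi s)) (phi (padd (padd r s) z)),
          incl (sadd (psingle (padd r (popp s))) (rset Gam Z)) (rset Gam D) ->
            exists2 z, rset Gam Z z &
              lcoset_eq H (gmul (phi r) (ginv (phi s))) (phi (padd (padd r (popp s)) z)),
          incl (sadd (psingle (padd (popp r) s)) (rset Gam Z)) (rset Gam D) ->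
            exists2 z, rset Gam Z z &
              lcoset_eq H (gmul (ginv (phi r)) (phi s)) (phi (padd (padd (popp r) s) z))
        & incl (sadd (psingle (popp s)) (rset Gam Z)) (rset Gam D) ->
            exists2 z, rset Gam Z z &
              lcoset_eq H (ginv (phi s)) (phi (padd (popp s) z))]].

Definition is_equiv (X : Type) (E : X -> X -> Prop) : Prop :=
  [/\ (forall x, E x x), (forall x y, E x y -> E y x)
    & (forall x y z, E x y -> E y z -> E x z)].
Definition is_class (X : Type) (E : X -> X -> Prop) (U : X -> Prop) : Prop :=
  exists y, forall z, U z <-> E y z.
Definition sat (X : Type) (E : X -> X -> Prop) (Y : X -> Prop) : X -> Prop :=
  fun z => exists2 y, Y y & E z y.

Definition roughly (R : realType) (G : grp) (X : Type) (act : G -> X -> X) l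
  (Gam : finZmodType) (phi : pt l Gam -> G) (D Z : rect l) (Hs : seq (G -> Prop))
  (delta : R) (B : rect l) (x : X) (U : X -> Prop) : Prop :=
  [/\ incl (rset Gam (rnscale 2 B)) (rset Gam D),
      in_XH act Hs x /\ (0 < delta /\ delta < 1),
      sqle (rnscale 2 Z) (rscale delta B),
      incl (img act D phi (rset Gam (rscale (1 - delta) B)) x) U
    & incl U (img act D phi (rset Gam (rscale (1 + delta) B)) x)].

Definition rectangular (R : realType) (G : grp) (X : Type) (act : G -> X -> X) l
  (Gam : finZmodType) (phi : pt l Gam -> G) (D Z : rect l) (Hs : seq (G -> Prop))
  (A : rect l) (eps : R) (E : X -> X -> Prop) : Prop :=
  [/\ centered A, 0 < eps /\ eps < 1,
      (forall U, is_class E U -> ~ (exists2 y, U y & in_XH act Hs y) ->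
         exists y, forall z, U z <-> z = y)
    & (forall U, is_class E U -> (exists2 y, U y & in_XH act Hs y) ->
         exists y (delta : R) (B : rect l),
           [/\ in_XH act Hs y /\ 0 < delta, sqle A B,
               incl (rset Gam (rnscale (2 ^ (22 * l)) B)) (rset Gam D),
               sqle (rscale (2 * delta) B) (rscale eps A)
             & roughly act phi D Z Hs delta B y U])].

Definition bdry (G : grp) (X : Type) (act : G -> X -> X) l
  (Gam : finZmodType) (phi : pt l Gam -> G) (D : rect l) (Hs : seq (G -> Prop))
  (E : X -> X -> Prop) (A' : rect l) (i : 'I_l) : X -> Prop :=
  fun x => in_XH act Hs x /\
    ~ (exists z,
         sat E (img act D phi
                  (sadd (psingle (pe Gam i (- (rr A' i)%:Z))) (rset Gam (rface A' i))) x) z /\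
         sat E (img act D phi
                  (sadd (psingle (pe Gam i (rr A' i)%:Z)) (rset Gam (rface A' i))) x) z).

(* Main.v *)
Require Import Defs.
From HB Require Import structures.
From mathcomp Require Import all_boot all_order all_algebra.
From mathcomp Require Import reals.
From mathcomp Require Import zify ring lra.
Import Order.TTheory GRing.Theory Num.Theory.
Local Open Scope ring_scope.
Set Implicit Arguments. Unset Strict Implicit.

Lemma int_leR (R : realType) (v : int) (n : nat) :
  (`|v| <= n%:Z) = (`|v%:~R : R| <= n%:R).
Proof. by rewrite -intr_norm -[n%:R]/((n%:Z)%:~R) ler_int. Qed.

Lemma int_le_trunc (R : realType) (v : int) (x : R) :
  0 <= x -> `|v%:~R : R| <= x -> `|v| <= (Num.truncn x)%:Z.
Proof.
move=> x0 h; rewrite -abszE lez_nat truncn_ge_nat // natr_absz intr_norm //.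
Qed.

Lemma trunc_leR (R : realType) (x : R) : 0 <= x -> (Num.truncn x)%:R <= x.
Proof. by move=> x0; rewrite truncn_le. Qed.

Lemma trunc_gtR (R : realType) (x : R) : x < (Num.truncn x)%:R + 1.
Proof. by rewrite natr1; apply: truncnS_gt. Qed.

Lemma CH_real (R : realType) (delta eps q : R) (a b z : nat) :
  0 < delta -> delta < 1 -> 0 < eps -> 6 * eps < q -> q < 1 - eps ->
  (a <= b)%N -> (0 < z)%N -> (2 * z <= Num.truncn (delta * b%:R))%N ->
  (Num.truncn (2 * delta * b%:R) <= Num.truncn (eps * a%:R))%N ->
  [/\ 2 <= delta * b%:R, z%:R * 2 <= delta * b%:R,
      3 / 2 * (delta * b%:R) < eps * a%:R, 3 < eps * a%:R &
      [/\ 6 * (eps * a%:R) < q * a%:R, q * a%:R <= a%:R, (a%:R : R) <= b%:R &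
          eps * a%:R <= eps * b%:R]].
Proof.
move=> d0 d1 e0 qe q1 ab z0 hz hd.
have P0 : 0 <= delta * b%:R by rewrite mulr_ge0 // ltW.
have h1 : (2 * z)%:R <= delta * b%:R by rewrite -truncn_ge_nat.
have z1 : (1 : R) <= z%:R by rewrite ler1n.
have h2 : 2 * delta * b%:R < eps * a%:R + 1.
  have t1 := trunc_gtR (2 * delta * b%:R).
  apply: (lt_le_trans t1); rewrite lerD2r.
  apply: (le_trans _ (trunc_leR _)); last by rewrite mulr_ge0 // ltW.
  by rewrite ler_nat.
rewrite natrM in h1.
have ab' : (a%:R : R) <= b%:R by rewrite ler_nat.
have Pd : 2 * delta * b%:R = 2 * (delta * b%:R) by rewrite mulrA.
rewrite Pd in h2.
set P := delta * b%:R in P0 h1 h2 *.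
set E := eps * a%:R in h2 *.
have h3 : 2 <= P by lra.
have h4 : 3 < E by lra.
have a0 : 0 < (a%:R : R).
  rewrite ltr0n lt0n; apply/negP => /eqP a0; move: h4; rewrite /E a0 mulr0; lra.
split; try lra.
split.
- have : 0 < (q - 6 * eps) * a%:R by rewrite mulr_gt0 // subr_gt0.
  rewrite /E; lra.
- have : 0 <= (1 - q) * a%:R by rewrite mulr_ge0 ?(ltW a0) //; lra.
  lra.
- exact: ab'.
- by rewrite /E ler_pM2l.
Qed.

Lemma int_leR' (R : realType) (v : int) (x : R) :
  0 <= x -> `|v| <= (Num.truncn x)%:Z -> `|v%:~R : R| <= x.
Proof. by move=> x0; rewrite (int_leR R) => h; apply: (le_trans h); exact: trunc_leR. Qed.

Lemma L_dom (R : realType) (delta eps q : R) (a b z n : nat) (t S zz : int) :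
  0 < delta -> delta < 1 -> 0 < eps -> 6 * eps < q -> q < 1 - eps ->
  (a <= b)%N -> (0 < z)%N -> (2 * z <= Num.truncn (delta * b%:R))%N ->
  (Num.truncn (2 * delta * b%:R) <= Num.truncn (eps * a%:R))%N ->
  (4 <= n)%N ->
  `|t| <= (Num.truncn (q * a%:R))%:Z ->
  `|S| <= (Num.truncn ((1 + delta) * b%:R))%:Z -> `|zz| <= z%:Z ->
  `|t + S + zz| <= (n * b)%:Z.
Proof.
move=> d0 d1 e0 qe q1 ab z0 hz hd n4 ht hS hzz.
have [P2 Pz PE E3 [Eq qa ab' Eb]] := CH_real d0 d1 e0 qe q1 ab z0 hz hd.
have a0 : (0 : R) <= a%:R by [].
have b0 : (0 : R) <= b%:R by [].
have q0 : 0 <= q by lra.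
have ht' := int_leR' (R:=R) (mulr_ge0 q0 a0) ht.
have hS' := int_leR' (R:=R) (mulr_ge0 (ltW (ltr_pwDl ltr01 (ltW d0))) b0) hS.
rewrite (int_leR R) in hzz.
rewrite (int_leR R) !rmorphD /= natrM.
have n4' : (4 : R) <= n%:R by rewrite (ler_nat R 4).
have nb : 4 * b%:R <= n%:R * (b%:R : R) by rewrite ler_wpM2r.
have e1 := ler_normD (t%:~R + S%:~R : R) zz%:~R.
have e2 := ler_normD (t%:~R : R) S%:~R.
have dm : (1 + delta) * b%:R = b%:R + delta * b%:R by ring.
rewrite dm in hS'.
have Pb : delta * b%:R <= b%:R by rewrite ler_piMl // ltW.
move: ht' hS' hzz e1 e2 nb Pz qa ab' Pb; set P := delta * b%:R; set QA := q * a%:R; lra.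
Qed.

Definition clampz (b S : int) : int := if b < S then b else if S < - b then - b else S.
Lemma clampz_le b S : 0 <= b -> `|clampz b S| <= b.
Proof. rewrite /clampz; case: (b < S) /idP => h1; case: (S < -b) /idP => h2; lia. Qed.
Lemma clampz_in b S : `|S| <= b -> S - clampz b S = 0.
Proof. rewrite /clampz; case: (b < S) /idP => h1; case: (S < -b) /idP => h2; lia. Qed.
Lemma clampz_out b S : 0 <= b -> b <= `|S| -> `|S - clampz b S| = `|S| - b.
Proof. rewrite /clampz; case: (b < S) /idP => h1; case: (S < -b) /idP => h2; lia. Qed.

Lemma L_Qb (R : realType) (q : R) (a b : nat) :
  0 <= q -> q < 1 -> (a <= b)%N -> (Num.truncn (q * a%:R) <= b)%N.
Proof.
move=> q0 q1 ab; rewrite truncn_le_nat.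
have : (a%:R : R) <= b%:R by rewrite ler_nat.
have : q * a%:R <= (a%:R : R) by rewrite ler_piMl // ltW.
rewrite -natr1; lra.
Qed.

Lemma L_K (R : realType) (delta eps q : R) (a b z : nat) :
  0 < delta -> delta < 1 -> 0 < eps -> 6 * eps < q -> q < 1 - eps ->
  (a <= b)%N -> (0 < z)%N -> (2 * z <= Num.truncn (delta * b%:R))%N ->
  (Num.truncn (2 * delta * b%:R) <= Num.truncn (eps * a%:R))%N ->
  (Num.truncn ((1 + delta) * b%:R) <= b + Num.truncn (2 * q * a%:R))%N.
Proof.
move=> d0 d1 e0 qe q1 ab z0 hz hd.
have [P2 Pz PE E3 [Eq qa ab' Eb]] := CH_real d0 d1 e0 qe q1 ab z0 hz hd.
rewrite truncn_le_nat -natr1 natrD.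
have := trunc_gtR (2 * q * a%:R).
have e1 : 2 * q * a%:R = 2 * (q * a%:R) by rewrite mulrA.
have e2 : (1 + delta) * b%:R = b%:R + delta * b%:R by ring.
rewrite e1 e2.
move: PE Eq E3; set P := delta * b%:R; set QA := q * a%:R; set E := eps * a%:R; lra.
Qed.

Lemma L_out_p (b T tr : nat) (S : int) :
  (tr <= b + T)%N -> b%:Z - T%:Z <= S -> `|S| <= tr%:Z -> `|S - b%:Z| <= T%:Z.
Proof. move=> *; lia. Qed.
Lemma L_out_m (b T tr : nat) (S : int) :
  (tr <= b + T)%N -> S <= - (b%:Z - T%:Z) -> `|S| <= tr%:Z -> `|S - - b%:Z| <= T%:Z.
Proof. move=> *; lia. Qed.
Lemma L_out_j (b T tr : nat) (S : int) :
  (tr <= b + T)%N -> `|S| <= tr%:Z -> `|S - clampz b%:Z S| <= T%:Z.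
Proof.
move=> h1 h2; have [h|h] := lerP `|S| b%:Z.
  by rewrite clampz_in.
by rewrite clampz_out //; [lia| exact: ltW].
Qed.

Lemma L_in_i (R : realType) (delta eps q : R) (a b z : nat) (t S zz : int) :
  0 < delta -> delta < 1 -> 0 < eps -> 6 * eps < q -> q < 1 - eps ->
  (a <= b)%N -> (0 < z)%N -> (2 * z <= Num.truncn (delta * b%:R))%N ->
  (Num.truncn (2 * delta * b%:R) <= Num.truncn (eps * a%:R))%N ->
  `|t| <= (Num.truncn (q * a%:R))%:Z ->
  `|S| + (Num.truncn (2 * q * a%:R))%:Z + 1 <= b%:Z -> `|zz| <= z%:Z ->
  `|t + S + zz| <= (Num.truncn ((1 - delta) * b%:R))%:Z.
Proof.
move=> d0 d1 e0 qe q1 ab z0 hz hd ht hS hzz.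
have [P2 Pz PE E3 [Eq qa ab' Eb]] := CH_real d0 d1 e0 qe q1 ab z0 hz hd.
have a0 : (0 : R) <= a%:R by [].
have b0 : (0 : R) <= b%:R by [].
have q0 : 0 <= q by lra.
have ht' := int_leR' (R:=R) (mulr_ge0 q0 a0) ht.
rewrite (int_leR R) in hzz.
have hS' : `|S%:~R| + (Num.truncn (2 * q * a%:R))%:R + 1 <= (b%:R : R).
  by rewrite -(ler_int R) !rmorphD /= intr_norm in hS.
apply: int_le_trunc; first by rewrite mulr_ge0 // subr_ge0 ltW.
rewrite !rmorphD /=.
have e1 := ler_normD (t%:~R + S%:~R : R) zz%:~R.
have e2 := ler_normD (t%:~R : R) S%:~R.
have := trunc_gtR (2 * q * a%:R).
have f1 : 2 * q * a%:R = 2 * (q * a%:R) by rewrite mulrA.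
have f2 : (1 - delta) * b%:R = b%:R - delta * b%:R by ring.
move: ht' hS' hzz e1 e2 Pz PE Eq E3 P2; rewrite f1 f2; set P := delta * b%:R; set QA := q * a%:R;
  set E := eps * a%:R; set TT := (Num.truncn _)%:R; lra.
Qed.

Lemma L_in_j (R : realType) (delta eps q : R) (a b z : nat) (S zz : int) :
  0 < delta -> delta < 1 -> 0 < eps -> 6 * eps < q -> q < 1 - eps ->
  (a <= b)%N -> (0 < z)%N -> (2 * z <= Num.truncn (delta * b%:R))%N ->
  (Num.truncn (2 * delta * b%:R) <= Num.truncn (eps * a%:R))%N ->
  `|S| <= (Num.truncn ((1 + delta) * b%:R))%:Z -> `|zz| <= z%:Z ->
  `|S - clampz (Num.truncn (q * a%:R))%:Z S + zz| <= (Num.truncn ((1 - delta) * b%:R))%:Z.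
Proof.
move=> d0 d1 e0 qe q1 ab z0 hz hd hS hzz.
have [P2 Pz PE E3 [Eq qa ab' Eb]] := CH_real d0 d1 e0 qe q1 ab z0 hz hd.
have a0 : (0 : R) <= a%:R by [].
have b0 : (0 : R) <= b%:R by [].
have q0 : 0 <= q by lra.
have hS' := int_leR' (R:=R) (mulr_ge0 (ltW (ltr_pwDl ltr01 (ltW d0))) b0) hS.
rewrite (int_leR R) in hzz.
apply: int_le_trunc; first by rewrite mulr_ge0 // subr_ge0 ltW.
set Q := Num.truncn (q * a%:R).
have f2 : (1 - delta) * b%:R = b%:R - delta * b%:R by ring.
have f3 : (1 + delta) * b%:R = b%:R + delta * b%:R by ring.
rewrite f2; rewrite f3 in hS'.
have Pb : delta * b%:R <= b%:R by rewrite ler_piMl // ltW.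
rewrite rmorphD /=.
have e1 := ler_normD ((S - clampz Q%:Z S)%:~R : R) zz%:~R.
have [h|h] := lerP `|S| Q%:Z.
  rewrite clampz_in // rmorph0 add0r.
  have eb : eps * b%:R <= b%:R by rewrite ler_piMl // ltW //; lra.
  move: hzz Pz Pb PE Eb eb; set P := delta * b%:R; set E := eps * a%:R;
    set B := b%:R; set EB := eps * b%:R; lra.
have h' : `|(S - clampz Q%:Z S)%:~R : R| = `|S%:~R : R| - Q%:R.
  by rewrite -intr_norm clampz_out // ?ltW // rmorphB /= intr_norm.
have := trunc_gtR (q * a%:R); rewrite -/Q.
move: hzz e1 h' hS' Pz PE Eq E3 P2 Eb ab'; set P := delta * b%:R; set QA := q * a%:R;
  set E := eps * a%:R; set TT := Q%:R; lra.
Qed.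

Theorem lemma6p3 (R : realType) (G : grp) (X : Type) (act : G -> X -> X)
  (l : nat) (Gam : finZmodType) (phi : pt l Gam -> G) (D Z : rect l)
  (Hs : seq (G -> Prop)) (eps q : R) (A : rect l) (E : X -> X -> Prop)
  (U : X -> Prop) (delta : R) (B : rect l) (x : X) :
  countable_grp G -> is_action act -> is_chart phi D Z Hs ->
  0 < eps -> 6 * eps < q -> q < 1 - eps -> centered A ->
  is_equiv E -> rectangular act phi D Z Hs A eps E ->
  is_class E U -> roughly act phi D Z Hs delta B x U ->
  sqle A B -> incl (rset Gam (rnscale (2 ^ (22 * l)) B)) (rset Gam D) ->
  sqle (rscale (2 * delta) B) (rscale eps A) ->
  forall (i : 'I_l) (y : X),
    bdry act phi D Hs E (rscale q A) i y -> U y ->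
    img act D phi
      (sadd (psingle (pe Gam i (- (rr B i)%:Z)))
            (sadd (rset Gam (rface B i)) (rset Gam (rscale (2 * q) A)))) x y \/
    img act D phi
      (sadd (psingle (pe Gam i (rr B i)%:Z))
            (sadd (rset Gam (rface B i)) (rset Gam (rscale (2 * q) A)))) x y.
Proof.
move=> _ [act1 actM] [Hsub _ [cZ Zpos] [cD _ _ _] chartM] e0 qe q1 cA
  [Erefl Esym Etrans] _ [y0 clU] [_ [[H0 H0in H0st] [d0 d1]] sZB inU outU]
  sAB incD sdB i y [_ bd] Uy.
have l0 : (0 < l)%N by apply: (leq_ltn_trans _ (ltn_ord i)).
have n4 : (4 <= 2 ^ (22 * l))%N.
  apply: (@leq_trans (2 ^ 2)) => //; rewrite leq_exp2l //; lia.
have Dbig : forall k, (2 ^ (22 * l) * rr B k <= rr D k)%N.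
  move=> k; set n := (2 ^ (22 * l))%N.
  have hp := incD ([ffun j => rc B j + (n * rr B j)%:Z], 0).
  have hm := incD ([ffun j => rc B j - (n * rr B j)%:Z], 0).
  have hp' : rset Gam D ([ffun j => rc B j + (n * rr B j)%:Z], 0).
    by apply: hp => j /=; rewrite ffunE; lia.
  have hm' : rset Gam D ([ffun j => rc B j - (n * rr B j)%:Z], 0).
    by apply: hm => j /=; rewrite ffunE; lia.
  move: (hp' k) (hm' k); rewrite /= !ffunE cD subr0 subr0; lia.
have [[s1 s2] [sB sD] ys] := outU y Uy.
have Hk : forall k, [/\ (rr A k <= rr B k)%N, (0 < rr Z k)%N,
    (2 * rr Z k <= Num.truncn (delta * (rr B k)%:R))%N &
    (Num.truncn (2 * delta * (rr B k)%:R) <= Num.truncn (eps * (rr A k)%:R))%N].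
  by move=> k; split; [exact: sAB|exact: Zpos|exact: sZB|exact: sdB].
have Kk : forall k, (Num.truncn ((1 + delta) * (rr B k)%:R) <=
                     rr B k + Num.truncn (2 * q * (rr A k)%:R))%N.
  by move=> k; have [h1 h2 h3 h4] := Hk k; exact: (L_K d0 d1 e0 qe q1 h1 h2 h3 h4).
have sBk : forall k, `|s1 k - rc B k| <= (Num.truncn ((1 + delta) * (rr B k)%:R))%:Z.
  by move=> k; exact: (sB k).
have dec : forall t, `|s1 i - rc B i - t| <= (Num.truncn (2 * q * (rr A i)%:R))%:Z ->
   img act D phi (sadd (psingle (pe Gam i t))
     (sadd (rset Gam (rface B i)) (rset Gam (rscale (2 * q) A)))) x y.
  move=> t ht; exists (s1, s2); last exact: ys.
  split=> //.
  exists (pe Gam i t).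
  exists (padd ([ffun k => if k == i then rc B k
                  else rc B k + clampz (rr B k)%:Z (s1 k - rc B k)], s2)
               ([ffun k => if k == i then s1 k - rc B k - t
                  else (s1 k - rc B k) - clampz (rr B k)%:Z (s1 k - rc B k)], 0)).
  split => //.
    exists ([ffun k => if k == i then rc B k
                  else rc B k + clampz (rr B k)%:Z (s1 k - rc B k)], s2).
    exists ([ffun k => if k == i then s1 k - rc B k - t
                  else (s1 k - rc B k) - clampz (rr B k)%:Z (s1 k - rc B k)], 0).
    split => //.
    - move=> k /=; rewrite ffunE.
      have [->|nk] := eqVneq k i; first by rewrite ?eqxx subrr.
      rewrite ?(negbTE nk) addrAC subrr add0r; exact: clampz_le.
    - move=> k /=; rewrite ffunE cA subr0.
      have [->|nk] := eqVneq k i; first by rewrite ?eqxx.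
      rewrite ?(negbTE nk); exact: (L_out_j (Kk k) (sBk k)).
  congr (_, _); last by rewrite /= add0r addr0.
  apply/ffunP => k; rewrite !ffunE.
  have [->|nk] := eqVneq k i; first by rewrite ?eqxx; ring.
  by rewrite ?(negbTE nk); ring.
have [hR|hR] := lerP ((rr B i)%:Z - (Num.truncn (2 * q * (rr A i)%:R))%:Z) (s1 i - rc B i).
  by right; apply: dec; exact: (L_out_p (Kk i) hR (sBk i)).
have [hL|hL] := lerP (s1 i - rc B i) (- ((rr B i)%:Z - (Num.truncn (2 * q * (rr A i)%:R))%:Z)).
  by left; apply: dec; exact: (L_out_m (Kk i) hL (sBk i)).
exfalso.
have hint : `|s1 i - rc B i| + (Num.truncn (2 * q * (rr A i)%:R))%:Z + 1 <= (rr B i)%:Z.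
  lia.
have H01 : H0 (gone G) by case: (Hsub _ H0in).
have key : forall t, `|t| <= (Num.truncn (q * (rr A i)%:R))%:Z ->
   exists p, U p /\ img act D phi
     (sadd (psingle (pe Gam i t)) (rset Gam (rface (rscale q A) i))) y p.
  move=> t ht.
  have [w [wi wj w2]] : exists w : pt l Gam, [/\ w.1 i = t,
      (forall k, k != i -> w.1 k = - clampz (Num.truncn (q * (rr A k)%:R))%:Z (s1 k - rc B k))
      & w.2 = 0].
    exists ([ffun k => if k == i then t else
               - clampz (Num.truncn (q * (rr A k)%:R))%:Z (s1 k - rc B k)], 0).
    by split => [|k nk|] //=; rewrite ffunE ?eqxx // (negbTE nk).
  have wk : forall k, `|w.1 k| <= (Num.truncn (q * (rr A k)%:R))%:Z.
    move=> k; have [->|nk] := eqVneq k i; first by rewrite wi.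
    by rewrite wj // normrN clampz_le.
  have q0 : 0 <= q by lra.
  have qlt1 : q < 1 by lra.
  have wD : rset Gam D w.
    move=> k; rewrite cD subr0; apply: (le_trans (wk k)).
    have := L_Qb q0 qlt1 (sAB k).
    have := Dbig k.
    have : (rr B k <= 2 ^ (22 * l) * rr B k)%N by rewrite leq_pmull // (leq_trans _ n4).
    lia.
  have incZ : incl (sadd (psingle (padd w (s1, s2))) (rset Gam Z)) (rset Gam D).
    move=> v [u [zz [-> zzZ ->]]]; apply: incD => k /=; rewrite !ffunE /=.
    have [? ? ? ?] := Hk k.
    have hz : `|zz.1 k| <= (rr Z k)%:Z by have := zzZ k; rewrite cZ subr0.
    rewrite (_ : w.1 k + s1 k + zz.1 k - rc B k = w.1 k + (s1 k - rc B k) + zz.1 k);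
      last by ring.
    exact: (L_dom d0 d1 e0 qe q1 _ _ _ _ n4 (wk k) (sBk k) hz).
  have [_ hM _ _ _] := chartM w (s1, s2) H0 wD sD H0in.
  have [z zZ co] := hM incZ.
  have vD : rset Gam D (padd (padd w (s1, s2)) z).
    by apply: incZ; exists (padd w (s1, s2)), z.
  have hact : act (phi w) y = act (phi (padd (padd w (s1, s2)) z)) x.
    rewrite ys -actM.
    have [h hH ->] := (co (gmul (phi w) (phi (s1, s2)))).1
      (ex_intro2 _ _ (gone G) H01 (esym (gmulg1 _))).
    by rewrite actM; congr act; apply/H0st.
  exists (act (phi w) y); split.
    apply: inU; exists (padd (padd w (s1, s2)) z); last exact: hact.
    split => // k /=; rewrite !ffunE /=.
    have [? ? ? ?] := Hk k.
    have hz : `|z.1 k| <= (rr Z k)%:Z by have := zZ k; rewrite cZ subr0.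
    have [ek|nk] := eqVneq k i.
      subst k; rewrite wi.
      rewrite (_ : t + s1 i + z.1 i - rc B i = t + (s1 i - rc B i) + z.1 i); last by ring.
      exact: (L_in_i d0 d1 e0 qe q1 _ _ _ _ ht hint hz).
    rewrite wj //.
    rewrite (_ : _ + s1 k + z.1 k - rc B k = (s1 k - rc B k)
       - clampz (Num.truncn (q * (rr A k)%:R))%:Z (s1 k - rc B k) + z.1 k); last by ring.
    exact: (L_in_j d0 d1 e0 qe q1 _ _ _ _ (sBk k) hz).
  exists w => //; split => //.
  exists (pe Gam i t), ([ffun k => if k == i then 0 else w.1 k], w.2); split => //.
    rewrite /rset => k /=; rewrite ffunE cA subr0.
    by case: ifP => _; [rewrite normr0 | exact: wk].
  case: w wi wj w2 {wk wD incZ hM co vD hact} => w1 w2' wi wj /= ->.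
  congr (_, _); last by rewrite add0r.
  apply/ffunP => k; rewrite !ffunE.
  have [->|nk] := eqVneq k i; first by rewrite ?eqxx wi addr0.
  by rewrite ?(negbTE nk) add0r.
have hQ1 : `|- (Num.truncn (q * (rr A i)%:R))%:Z| <= (Num.truncn (q * (rr A i)%:R))%:Z.
  by rewrite normrN.
have hQ2 : `|(Num.truncn (q * (rr A i)%:R))%:Z| <= (Num.truncn (q * (rr A i)%:R))%:Z.
  by [].
have [p1 [U1 I1]] := key _ hQ1.
have [p2 [U2 I2]] := key _ hQ2.
apply: bd; exists p1; split.
  by exists p1 => //; apply: Erefl.
exists p2 => //.
exact: (Etrans _ y0 _ (Esym _ _ ((clU p1).1 U1)) ((clU p2).1 U2)).
Qed.
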